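(* Let $S=\{0,s_1,\dots,s_n,1,\infty\}$ with cyclic order $0<s_1<\dots<s_n<1<\infty<0$, and for $i\in\{1,\dots,n\}$ let $\pi_i:\overline{\mathcal M}_{0,S}\to\overline{\mathcal M}_{0,\{0,s_i,1,\infty\}}=\mathbb{P}^1$ be the contraction morphism forgetting all marked points except $0,s_i,1,\infty$. Then the image under $\pi_i$ of every vertex of $B_n$ lies in $\{0,1\}$.
   Context: $\overline{\mathcal M}_{0,T}$ is the moduli space of $T$-pointed stable genus-$0$ curves; boundary divisors $D(\sigma)$ correspond to unordered stable $2$-partitions of $T$. $\overline{\mathcal M}_{0,\{0,s_i,1,\infty\}}$ is identified with $\mathbb{P}^1$ via the position of $s_i$ when the points $0,1,\infty$ are placed at $0,1,\infty$. A stable $2$-partition of $S$ is strictly ordered if one of its parts consists of cyclically consecutive elements for the given cyclic order. $B_n$ is the union of the boundary divisors $D(\sigma)$ with $\sigma$ strictly ordered (equivalently the Zariski closure of the boundary of the closure of the real simplex $\{0<t_1<\dots<t_n<1\}$ in $\overline{\mathcal M}_{0,S}(\mathbb{C})$). A vertex of $B_n$ is a point lying on $n$ distinct irreducible components of $B_n$. *)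

(* Defs.v *)
(* Concrete model of \bar M_{0,S} via its standard closed
   embedding into a product of copies of \bar M_{0,4} = P^1 (one factor per
   increasing quadruple of marked points). *)
From mathcomp Require Import all_boot all_algebra.
Set Implicit Arguments. Unset Strict Implicit. Unset Printing Implicit Defensive.
Import GRing.Theory.
Local Open Scope ring_scope.

(* marked points S = 'I_m, m = n+3 : index 0 = "0", index k (1<=k<=n) = s_k,
   index n+1 = "1", index n+2 = "infinity"; the index order is the cyclic order. *)

Definition det2 (K : fieldType) (p q : K * K) : K := p.1 * q.2 - p.2 * q.1.

Definition quad (m : nat) := ('I_m * 'I_m * 'I_m * 'I_m)%type.

Definition incr m (q : quad m) : bool :=
  let '(a, b, c, d) := q in [&& (a < b)%N, (b < c)%N & (c < d)%N].

(* forgetful map to \bar M_{0,{a,b,c,d}} = P^1 on the open part, given in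
   homogeneous coordinates: position of b when a,c,d are put at 0,1,oo. *)
Definition crossratio (K : fieldType) m (t : 'I_m -> K * K) (q : quad m) : K * K :=
  let '(a, b, c, d) := q in
  if incr q then (det2 (t b) (t a) * det2 (t c) (t d),
                  det2 (t c) (t a) * det2 (t b) (t d))
  else (1, 1).

Definition config (K : fieldType) m (t : 'I_m -> K * K) : Prop :=
  forall j k : 'I_m, j != k -> det2 (t j) (t k) != 0.

Definition proportional (K : fieldType) (p r : K * K) : Prop :=
  exists c : K, c != 0 /\ r = (c * p.1, c * p.2).

(* points of the product of P^1's: one nonzero pair per quadruple *)
Definition pt (K : Type) m := quad m -> K * K.

(* representatives of points of the open part M_{0,S} *)
Definition M0 (K : fieldType) m (x : pt K m) : Prop :=
  exists t : 'I_m -> K * K, config t /\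
    forall q, proportional (crossratio t q) (x q).

Inductive pexpr (K V : Type) : Type :=
  | PC of K
  | PX of V
  | PAdd of pexpr K V & pexpr K V
  | PMul of pexpr K V & pexpr K V.
Arguments PC {K V}. Arguments PX {K V}.

Fixpoint peval (K : fieldType) V (v : V -> K) (e : pexpr K V) : K :=
  match e with
  | PC c => c
  | PX i => v i
  | PAdd e1 e2 => peval v e1 + peval v e2
  | PMul e1 e2 => peval v e1 * peval v e2
  end.

Definition coords (K : Type) m (x : pt K m) : quad m * bool -> K :=
  fun qb => if qb.2 then (x qb.1).1 else (x qb.1).2.

(* \bar M_{0,S}(K): Zariski closure of M_{0,S} in the product of P^1's.
   A polynomial vanishing at all representatives of all points of M0 lies in
   the multihomogeneous vanishing ideal, so this is the Zariski closure. *)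
Definition Mbar (K : fieldType) m (x : pt K m) : Prop :=
  (forall q, x q != (0, 0)) /\
  forall F : pexpr K (quad m * bool),
    (forall y : pt K m, M0 y -> peval (coords y) F = 0) ->
    peval (coords x) F = 0.

(* stable 2-partitions {A, ~:A} of S, represented by one part A *)
Definition stable_part m (A : {set 'I_m}) : bool :=
  (1 < #|A|)%N && (1 < #|~: A|)%N.

Definition cyc_interval m (A : {set 'I_m}) : Prop :=
  exists (j : 'I_m) (len : nat), A = [set k : 'I_m | ((k + m - j) %% m < len)%N].

Definition strictly_ordered m (A : {set 'I_m}) : Prop :=
  stable_part A /\ (cyc_interval A \/ cyc_interval (~: A)).

Definition same_partition m (A B : {set 'I_m}) : Prop := A = B \/ A = ~: B.

(* boundary divisor D({A, ~:A}) : every quadruple with two points on each side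
   is mapped to the boundary point of \bar M_{0,4} for that split:
   {a,b}|{c,d} -> 0 = [0:1], {b,c}|{a,d} -> 1 = [1:1], {b,d}|{a,c} -> oo = [1:0]. *)
Definition inD (K : fieldType) m (A : {set 'I_m}) (x : pt K m) : Prop :=
  Mbar x /\
  forall q : quad m, incr q ->
    let '(a, b, c, d) := q in
    let sa := a \in A in let sb := b \in A in
    let sc := c \in A in let sd := d \in A in
    ([&& sa == sb, sc == sd & sa != sc] -> (x q).1 = 0) /\
    ([&& sb == sc, sa == sd & sa != sb] -> (x q).1 = (x q).2) /\
    ([&& sb == sd, sa == sc & sa != sb] -> (x q).2 = 0).

Definition vertex (K : fieldType) n (x : pt K n.+3) : Prop :=
  Mbar x /\
  exists sig : 'I_n -> {set 'I_n.+3},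
    (forall k, strictly_ordered (sig k) /\ inD (sig k) x) /\
    (forall k l, k != l -> ~ same_partition (sig k) (sig l)).

(* the quadruple (0, s_i, 1, oo) for i : 'I_n (i.e. s_{i+1}) *)
Definition qi n (i : 'I_n) : quad n.+3 :=
  (inord 0, inord i.+1, inord n.+1, inord n.+2).

From mathcomp Require Import Rstruct complex.
From Stdlib Require Import Reals.
Definition CC : closedFieldType := (Rdefinitions.R)[i].

(* Main.v *)
From mathcomp Require Import all_boot all_algebra.
From mathcomp Require Import zify.
Require Import Defs.
Set Implicit Arguments. Unset Strict Implicit. Unset Printing Implicit Defensive.

Definition lam (p q : nat * nat) : bool :=
  [|| p.2 < q.1, q.2 < p.1, (p.1 <= q.1) && (q.2 <= p.2) | (q.1 <= p.1) && (p.2 <= q.2)].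

Fixpoint ownf (a b : nat) (P : seq (nat * nat)) : nat :=
  match P with
  | [::] => a
  | q :: P' => if (q.1 == a) && (q.2 < b) then maxn q.2 (ownf a b P') else ownf a b P'
  end.

Lemma ownf_ge a b P : a <= ownf a b P.
Proof. elim: P => //= q P IH; case: ifP => _ //; lia. Qed.

Lemma ownf_lt a b P : a < b -> ownf a b P < b.
Proof. move=> ab; elim: P => //= q P IH; case: ifP => // /andP[_ h]; lia. Qed.

Lemma ownf_ub a b P q : q \in P -> q.1 = a -> q.2 < b -> q.2 <= ownf a b P.
Proof.
elim: P => //= r P IH; rewrite inE => /orP[/eqP ->|qP] q1 q2.
  by rewrite q1 eqxx q2 /=; lia.
case: ifP => _; last exact: IH.
have := IH qP q1 q2; lia.
Qed.

Lemma ownf_cases a b P : ownf a b P = a \/ exists2 q, q \in P & [/\ q.1 = a, q.2 < b & ownf a b P = q.2].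
Proof.
elim: P => /= [|r P IH]; first by left.
case: ifP => [/andP[/eqP r1 r2]|_].
  rewrite /maxn; case: ltnP => h.
    case: IH => [e|[q qP [q1 q2 e]]]; first lia.
    right; exists q; first by rewrite inE qP orbT.
    by split.
  right; exists r; first by rewrite inE eqxx.
  by split.
case: IH => [e|[q qP [q1 q2 e]]]; first by left.
by right; exists q; rewrite ?inE ?qP ?orbT.
Qed.

Section Gap.
End Gap.

Lemma own_key (P : seq (nat * nat)) (p q : nat * nat) :
  uniq P ->
  {in P &, forall p q, p != q -> lam p q} ->
  p \in P -> q \in P -> q != p -> p.1 <= q.1 -> q.2 <= p.2 ->
  ~~ ((q.1 <= ownf p.1 p.2 P) && (ownf p.1 p.2 P < q.2)).
Proof.
case: p => a b; case: q => c d /=.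
move=> uP Hl pP qP qp h1 h2; apply/negP => /andP[c1 c2].
case: (ltngtP c a) => h3; first lia.
  case: (ownf_cases a b P) => [e|[[r1' r2'] rP /= [r1 r2 e]]]; first lia.
  have rq : (r1', r2') != (c, d) by apply/eqP => -[] ??; lia.
  by have := Hl _ _ rP qP rq; rewrite /lam /= => /or4P[h|h|/andP[h4 h5]|/andP[h4 h5]]; lia.
subst c.
have ne : d != b by apply/eqP => e; move: qp; rewrite e eqxx.
have := @ownf_ub a b P (a, d) qP (erefl _) (ltac:(lia) : d < b) => /=; lia.
Qed.

Lemma gap_bound N t (P : seq (nat * nat)) :
  uniq P -> (forall p : nat * nat, p \in P -> p.1 < p.2 <= N) ->
  {in P &, forall p q : nat * nat, p != q -> lam p q} ->
  0 < t < N ->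
  (forall p : nat * nat, p \in P -> p.1 <= t <= p.2 -> p.1 < t < p.2) ->
  size P <= N.-1.
Proof.
move=> uP bd Hl tN tw.
pose f (p : nat * nat) := ownf p.1 p.2 P.
have fin : forall p : nat * nat, p \in P -> p.1 <= f p < p.2.
  by move=> [a b] pP; rewrite /f ownf_ge ownf_lt //=; have := bd _ pP; rewrite /=; lia.
have finj : {in P &, injective f}.
  move=> p q pP qP e; apply/eqP; apply/negPn/negP => pq.
  have := fin p pP; have := fin q qP; move: e.
  have := Hl p q pP qP pq; have := own_key uP Hl pP qP (ltac:(by rewrite eq_sym)); have := own_key uP Hl qP pP pq.
  rewrite /f /lam.
  case: p q {pP qP pq} => [a b] [c d] /=; set u := ownf a b P; set v := ownf c d P.
  move=> k1 k2 /or4P[h|h|/andP[h1 h2]|/andP[h1 h2]]; lia.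
have twin : ~ ((t.-1 \in map f P) && (t \in map f P)).
  case/andP => /mapP[p pP ep] /mapP[q qP eq].
  have hp := fin p pP; have hq := fin q qP.
  have tp := tw p pP; have tq := tw q qP.
  have pq : p != q by apply/eqP => e; subst; lia.
  have := Hl p q pP qP pq; have := own_key uP Hl pP qP (ltac:(by rewrite eq_sym)); have := own_key uP Hl qP pP pq.
  move: ep eq hp hq tp tq; rewrite /f /lam.
  case: p q {pP qP pq} => [a b] [c d] /=; set u := ownf a b P; set v := ownf c d P.
  move=> ep eq hp hq tp tq k1 k2.
  have {}tp := tp ltac:(lia). have {}tq := tq ltac:(lia).
  case/or4P=> [h|h|/andP[h1 h2]|/andP[h1 h2]]; lia.
have umap : uniq (map f P) by rewrite map_inj_in_uniq.
pose t' := if t.-1 \in map f P then t else t.-1.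
have t'in : t' \in iota 0 N by rewrite mem_iota /t'; case: ifP => _; lia.
have nt' : t' \notin map f P.
  rewrite /t'; case: ifP => h; apply/negP => h'; apply: twin; by rewrite ?h ?h' //; rewrite h' in h.
rewrite -(size_map f) -(size_iota 0 N) -[(size _).-1](size_rem t'in).
apply: uniq_leq_size => // v vP.
rewrite (mem_rem_uniq _ (iota_uniq 0 N)) inE; apply/andP; split.
  by apply/eqP => e; move: nt'; rewrite -e vP.
case/mapP: vP => p pP ->; rewrite mem_iota; have := fin p pP; have := bd p pP.
case: p {pP} => a b /=; lia.
Qed.
Definition rho (m s w : nat) : nat := if s < w then w - s.+1 else w + m - s.+1.

Lemma djE m j w : j < m -> w < m ->
  (w + m - j) %% m = if j <= w then w - j else w + m - j.
Proof.
move=> jm wm; case: leqP => h.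
  by rewrite -addnBAC // modnDr modn_small //; lia.
by rewrite modn_small //; lia.
Qed.

Lemma cyc_lin m (s : 'I_m) (C : {set 'I_m}) : cyc_interval C ->
  exists a b, forall w : 'I_m, (w \in (if s \in C then ~: C else C)) = (a <= rho m s w < b).
Proof.
case=> j [len ->]; rewrite inE djE //.
have sm := ltn_ord s; have jm := ltn_ord j.
case: ifP => hs.
  exists (rho m s j + len - m), (rho m s j) => w.
  rewrite !inE djE //; have wm := ltn_ord w.
  move: hs; rewrite /rho.
  case: (leqP j s) => h1; case: (leqP j w) => h2; case: (ltnP s w) => h3; case: (ltnP s j) => h4;
    move=> hs; apply/idP/idP; lia.
exists (rho m s j), (rho m s j + len) => w.
rewrite !inE djE //; have wm := ltn_ord w.
move: hs; rewrite /rho.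
case: (leqP j s) => h1; case: (leqP j w) => h2; case: (ltnP s w) => h3; case: (ltnP s j) => h4;
  move=> hs; apply/idP/idP; lia.
Qed.
Definition typb (sa sb sc sd : bool) : nat :=
  if [&& sa == sb, sc == sd & sa != sc] then 1%N
  else if [&& sb == sc, sa == sd & sa != sb] then 2%N
  else if [&& sb == sd, sa == sc & sa != sb] then 3%N else 0%N.

Lemma quadF (K : fieldType) m (A B : {set 'I_m}) (x : pt K m) (a b c d : 'I_m) :
  (a < b)%N -> (b < c)%N -> (c < d)%N -> inD A x -> inD B x -> x (a, b, c, d) != (0%R, 0%R) ->
  typb (a \in A) (b \in A) (c \in A) (d \in A) != 0%N ->
  typb (a \in B) (b \in B) (c \in B) (d \in B) != 0%N ->
  typb (a \in A) (b \in A) (c \in A) (d \in A) = typb (a \in B) (b \in B) (c \in B) (d \in B).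
Proof.
move=> ab bc cd [_ /(_ (a, b, c, d))] + [_ /(_ (a, b, c, d))].
rewrite /incr ab bc cd /= => /(_ isT) [A1 [A2 A3]] /(_ isT) [B1 [B2 B3]].
move: A1 A2 A3 B1 B2 B3; rewrite /typb.
case: (x (a, b, c, d)) => p1 p2.
case: (a \in A); case: (b \in A); case: (c \in A); case: (d \in A);
case: (a \in B); case: (b \in B); case: (c \in B); case: (d \in B) => /=;
move=> A1 A2 A3 B1 B2 B3 nz k1 k2; try by [];
repeat match goal with H : is_true true -> _ |- _ => specialize (H isT) end;
(have e1 : p1 = 0%R by congruence); (have e2 : p2 = 0%R by congruence);
by rewrite e1 e2 eqxx in nz.
Qed.

Lemma ne_lt (p q : nat) : p != q -> (p < q) || (q < p).
Proof. by rewrite neq_ltn. Qed.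

Ltac tryq key a b c d :=
  have := key a b c d ltac:(assumption) ltac:(assumption) ltac:(assumption);
  rewrite /typb; repeat match goal with H : (_ \in _) = _ |- _ => rewrite H end;
  simpl; by move=> /(_ isT isT).

Lemma noncross (K : fieldType) m (A B : {set 'I_m}) (x : pt K m) (w y z u : 'I_m) :
  inD A x -> inD B x -> (forall q, x q != (0%R, 0%R)) ->
  (w \in A) = true -> (w \in B) = true -> (y \in A) = true -> (y \in B) = false ->
  (z \in A) = false -> (z \in B) = true -> (u \in A) = false -> (u \in B) = false -> False.
Proof.
move=> HA HB nz wA wB yA yB zA zB uA uB.
have key : forall a b c d : 'I_m, (a < b)%N -> (b < c)%N -> (c < d)%N -> _ :=
  fun a b c d h1 h2 h3 => quadF h1 h2 h3 HA HB (nz _).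
have ne : forall p q : 'I_m, (p \in A) != (q \in A) -> (p != q :> nat).
  by move=> p q h; apply: contra h => /eqP/val_inj ->.
have ne' : forall p q : 'I_m, (p \in B) != (q \in B) -> (p != q :> nat).
  by move=> p q h; apply: contra h => /eqP/val_inj ->.
have h1 : (w != z :> nat) by apply: ne; rewrite wA zA. have h2 : (w != u :> nat) by apply: ne; rewrite wA uA.
have h3 : (y != z :> nat) by apply: ne; rewrite yA zA. have h4 : (y != u :> nat) by apply: ne; rewrite yA uA.
have h5 : (w != y :> nat) by apply: ne'; rewrite wB yB. have h6 : (z != u :> nat) by apply: ne'; rewrite zB uB.
case/orP: (ne_lt h5) => o0; case/orP: (ne_lt h1) => o1; case/orP: (ne_lt h2) => o2; case/orP: (ne_lt h3) => o3; case/orP: (ne_lt h4) => o4; case/orP: (ne_lt h6) => o5;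
first [ tryq key w y z u | tryq key w y u z | tryq key w z y u | tryq key w z u y | tryq key w u y z | tryq key w u z y | tryq key y w z u | tryq key y w u z | tryq key y z w u | tryq key y z u w | tryq key y u w z | tryq key y u z w | tryq key z w y u | tryq key z w u y | tryq key z y w u | tryq key z y u w | tryq key z u w y | tryq key z u y w | tryq key u w y z | tryq key u w z y | tryq key u y w z | tryq key u y z w | tryq key u z w y | tryq key u z y w | exfalso; lia ].
Qed.

Lemma inD_setC (K : fieldType) m (A : {set 'I_m}) (x : pt K m) : inD A x -> inD (~: A) x.
Proof.
case=> Hm H; split=> // -[[[a b] c] d] /H {H} /=.
rewrite !inE.
by case: (a \in A); case: (b \in A); case: (c \in A); case: (d \in A).
Qed.

Lemma rho_lt m s w : s < m -> w < m -> rho m s w < m.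
Proof. rewrite /rho; case: ifP; lia. Qed.

Lemma rho_inj m s w w' : s < m -> w < m -> w' < m -> rho m s w = rho m s w' -> w = w'.
Proof. rewrite /rho; case: ifP; case: ifP; lia. Qed.

Lemma rho_s m s : s < m -> rho m s s = m.-1.
Proof. rewrite /rho ltnn; lia. Qed.

Lemma rho_surj n s r : s < n.+3 -> r < n.+3 -> exists w : 'I_n.+3, rho n.+3 s w = r.
Proof.
move=> sm rm.
exists (inord (if r + s.+1 < n.+3 then r + s.+1 else r + s.+1 - n.+3)).
rewrite /rho inordK; case: ifP; try case: ifP; lia.
Qed.

Lemma lam3 (p q : nat * nat) : p.1 <= q.1 -> q.2 <= p.2 -> lam p q.
Proof. by move=> h h'; rewrite /lam; apply/or4P; constructor 3; apply/andP. Qed.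
Lemma lam4 (p q : nat * nat) : q.1 <= p.1 -> p.2 <= q.2 -> lam p q.
Proof. by move=> h h'; rewrite /lam; apply/or4P; constructor 4; apply/andP. Qed.
Lemma lam12 (p q : nat * nat) : p.2 < q.1 \/ q.2 < p.1 -> lam p q.
Proof. by case=> h; rewrite /lam h ?orbT. Qed.

Lemma main_false (K : fieldType) n (x : pt K n.+3) (i : 'I_n) :
  vertex x -> (x (qi i)).1 != 0%R -> (x (qi i)).1 != (x (qi i)).2 -> False.
Proof.
case=> Hm [sig [Hsig Hdist]] h1 h2.
have nz : forall q, x q != (0%R, 0%R) := Hm.1.
pose s : 'I_n.+3 := inord i.+1.
have iv := ltn_ord i.
have sv : (s : nat) = i.+1 by rewrite inordK //; lia.
pose T k := if s \in sig k then ~: sig k else sig k.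
have TD : forall k, inD (T k) x.
  by move=> k; rewrite /T; case: ifP => _; [apply: inD_setC|]; exact: (Hsig k).2.
have Ts : forall k, s \notin T k.
  by move=> k; rewrite /T; case: ifP => h; rewrite ?inE h.
have Tst : forall k, (1 < #|T k|) && (1 < #|~: T k|).
  move=> k; have := (Hsig k).1.1; rewrite /stable_part /T.
  by case: ifP => _ //; rewrite setCK andbC.
have Tint : forall k, exists a b, forall w : 'I_n.+3, (w \in T k) = (a <= rho n.+3 s w < b).
  move=> k; case: (Hsig k).1.2 => hc.
    by have [a [b H]] := cyc_lin s hc; exists a, b.
  have [a [b H]] := cyc_lin s hc; exists a, b => w; rewrite -H /T !inE.
  by case: (s \in sig k) => /=; rewrite ?setCK.
have Tinj : forall k l, T k = T l -> k = l.
  move=> k l E; apply/eqP; apply/negPn/negP => kl; apply: (Hdist k l kl); move: E.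
  rewrite /T /same_partition; case: ifP => _; case: ifP => _ E;
  first [left; exact: setC_inj E | left; exact E | right; exact E
        | right; rewrite -E setCK // | right; by rewrite E setCK].
have Tcomp : forall k l, k != l ->
    [\/ T k :&: T l = set0, T k \subset T l | T l \subset T k].
  move=> k l kl.
  case: (eqVneq (T k :&: T l) set0) => [->|/set0Pn [w]]; first by constructor 1.
  rewrite inE => /andP[wk wl].
  case: (boolP (T k \subset T l)) => [h|/subsetPn [y yk yl]]; first by constructor 2.
  case: (boolP (T l \subset T k)) => [h|/subsetPn [z zl zk]]; first by constructor 3.
  exfalso; apply: (noncross (TD k) (TD l) nz (w:=w) (y:=y) (z:=z) (u:=s)) => //;
  exact: negbTE.
have rs : rho n.+3 s s = n.+2 by rewrite rho_s.
have rl : forall w : 'I_n.+3, rho n.+3 s w < n.+3 by move=> w; apply: rho_lt.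
have rinj : forall w w' : 'I_n.+3, rho n.+3 s w = rho n.+3 s w' -> w = w'.
  by move=> w w' /rho_inj e; apply/val_inj/e.
have Tpair : forall k, exists ab : nat * nat,
    [/\ ab.1 < ab.2, ab.2 <= n.+1 & forall w : 'I_n.+3, (w \in T k) = (ab.1 <= rho n.+3 s w <= ab.2)].
  move=> k; have [a [b H]] := Tint k.
  have /andP[/card_gt1P [u [v [uk vk uv]]] _] := Tst k.
  have hu := uk; have hv := vk; rewrite H in hu; rewrite H in hv.
  have ruv : rho n.+3 s u != rho n.+3 s v by apply: contra uv => /eqP /rinj ->.
  have bs : b <= n.+2.
    case: (leqP b n.+2) => // hb; move: (Ts k); rewrite H rs.
    have := rl u; lia.
  exists (a, b.-1); split => /=; try lia.
  by move=> w; rewrite H; have := rl w; move=> ?; apply/idP/idP; lia.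
have [pr prP] := fin_all_exists Tpair.
pose P := (0, n.+1) :: map pr (enum 'I_n).
have prmem : forall k w, (w \in T k) = ((pr k).1 <= rho n.+3 s w <= (pr k).2).
  by move=> k w; case: (prP k).
have prinj : injective pr.
  move=> k l e; apply: Tinj; apply/setP => w; by rewrite !prmem e.
pose p0 : 'I_n.+3 := inord 0. pose p1 : 'I_n.+3 := inord n.+1. pose pI : 'I_n.+3 := inord n.+2.
have r0 : rho n.+3 s p0 = (n - i).+1 by rewrite /rho sv /p0 inordK // ltn0; lia.
have r1 : rho n.+3 s p1 = (n - i).-1 by rewrite /rho sv /p1 inordK // ifT; lia.
have rI : rho n.+3 s pI = n - i by rewrite /rho sv /pI inordK // ifT; lia.
have bad : forall k, (p1 \in T k -> pI \in T k -> p0 \in T k) /\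
                     (pI \in T k -> p0 \in T k -> p1 \in T k).
  move=> k; have [_ /(_ (qi i))] := TD k.
  have -> : incr (qi i) by rewrite /incr /qi !inordK //=; lia.
  move=> /(_ isT); rewrite /qi /= -/p0 -/s -/p1 -/pI (negbTE (Ts k)).
  case=> [c1 [c2 _]]; split.
    move=> a b; apply/negPn/negP => c; move: h1; rewrite c1 ?eqxx //.
    by rewrite a b /= (negbTE c).
  move=> a b; apply/negPn/negP => c; move: h2; rewrite c2 ?eqxx //.
  by rewrite a b /= (negbTE c).
have := @gap_bound n.+1 (n - i) P.
have -> : size P = n.+1 by rewrite /= size_map size_enum_ord.
move=> H; have : n.+1 <= n; last by lia.
apply: H.
- rewrite /= map_inj_uniq // enum_uniq andbT.
  apply/mapP => -[k _ e].
  have := Tst k => /andP[_]; apply/negP; rewrite -leqNgt.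
  rewrite -(cards1 s); apply: subset_leq_card; apply/subsetP => w.
  rewrite !inE prmem -e /= => hw; apply/eqP/rinj; rewrite rs.
  have := rl w; lia.
- move=> p; rewrite inE => /orP[/eqP -> /=|/mapP [k _ ->]]; first by rewrite leqnn.
  by case: (prP k) => ?? _; apply/andP.
- move=> p q; rewrite !inE => /orP[/eqP ->|/mapP [k _ ->]] /orP[/eqP ->|/mapP [l _ ->]] pq.
  + by rewrite eqxx in pq.
  + by case: (prP l) => ?? _; apply: lam3 => //=.
  + by case: (prP k) => ?? _; apply: lam4 => //=.
  have kl : k != l by apply: contra pq => /eqP ->.
  have [a1 b1 _] := prP k; have [a2 b2 _] := prP l.
  case: (Tcomp k l kl) => [e|sub|sub].
  + apply: lam12; case: (ltnP (pr k).2 (pr l).1) => h; first by left.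
    right; rewrite ltnNge; apply/negP => h'.
    have [w hw] := @rho_surj n s (maxn (pr k).1 (pr l).1) (ltn_ord s) ltac:(lia).
    have : w \in T k :&: T l by rewrite inE !prmem hw; apply/andP; split; lia.
    by rewrite e inE.
  + have [w1 hw1] := @rho_surj n s (pr k).1 (ltn_ord s) ltac:(lia).
    have [w2 hw2] := @rho_surj n s (pr k).2 (ltn_ord s) ltac:(lia).
    have := subsetP sub w1; have := subsetP sub w2.
    rewrite !prmem hw1 hw2 => /(_ ltac:(lia)) + /(_ ltac:(lia)) => c1 c2.
    apply: lam4; lia.
  + have [w1 hw1] := @rho_surj n s (pr l).1 (ltn_ord s) ltac:(lia).
    have [w2 hw2] := @rho_surj n s (pr l).2 (ltn_ord s) ltac:(lia).
    have := subsetP sub w1; have := subsetP sub w2.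
    rewrite !prmem hw1 hw2 => /(_ ltac:(lia)) + /(_ ltac:(lia)) => c1 c2.
    apply: lam3; lia.
- lia.
- move=> p; rewrite inE => /orP[/eqP -> /=|/mapP [k _ ->]]; first lia.
  move=> h.
  have [ab _] := prP k.
  have hI : pI \in T k by rewrite prmem rI.
  have [b1 b2] := bad k.
  case: (ltnP (pr k).1 (n - i)) => ha.
    have h1' : p1 \in T k by rewrite prmem r1; lia.
    have := b1 h1' hI; rewrite prmem r0; lia.
  have h0 : p0 \in T k by rewrite prmem r0; lia.
  have := b2 hI h0; rewrite prmem r1; lia.
Qed.

From mathcomp Require Import all_boot all_algebra.
Local Open Scope ring_scope.

Theorem proposition2p7 (n : nat) (x : pt CC n.+3) :
  vertex x ->
  forall i : 'I_n, (x (qi i)).1 = 0 \/ (x (qi i)).1 = (x (qi i)).2.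
Proof.
move=> V i.
case: (eqVneq (x (qi i)).1 0) => [->|h1]; first by left.
case: (eqVneq (x (qi i)).1 (x (qi i)).2) => [e|h2]; first by right.
exfalso; exact: (main_false V h1 h2).
Qed.
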